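(* Consider the generative logic with $\mu\to 1$ in the setting below. Let $\Omega$ and $\Delta$ be finite multisets of time-indexed formulas such that $E'(\Delta)\neq\emptyset$. Then $$p(\Omega\mid\Delta)=\frac{|E(\Omega)\cap E'(\Delta)|}{|E'(\Delta)|}.$$
   Context: Let $\mathcal{L}$ be a propositional language and let $K,T\ge1$. There are data sequences $d_1,\dots,d_K$; repetitions are allowed, and data are identified by their index $k$. Each $d_k$ is associated with a sequence of models $m(d_k)=(m(d_k)^1,\dots,m(d_k)^T)$ of $\mathcal{L}$. The prior is $p(d_k)=1/K$. A time-indexed formula is written $\alpha^t$, with $\alpha\in\mathcal{L}$ and $1\le t\le T$. Write $[\![\alpha^t]\!]_k=1$ if $\alpha$ is true in $m(d_k)^t$, and $0$ otherwise. For $\mu\in(0,1)$ and a finite multiset $X$ of time-indexed formulas, define $$p(X\mid d_k,\mu)=\prod_{\alpha^t\in X}\mu^{[\![\alpha^t]\!]_k}(1-\mu)^{1-[\![\alpha^t]\!]_k}.$$ Then define $$p(\Omega\mid\Delta)=\lim_{\mu\to1}\frac{\sum_k p(\Omega\mid d_k,\mu)\,p(\Delta\mid d_k,\mu)\,p(d_k)}{\sum_k p(\Delta\mid d_k,\mu)\,p(d_k)}.$$ An index $k$ is an evidence of $X$ if $[\![\alpha^t]\!]_k=1$ for all $\alpha^t\in X$. Let $E(X)$ be the set of such indices. $X$ is called founded if $E(X)\neq\emptyset$. Let $MFS(\Delta)$ be the set of nonempty founded sub-multisets $S\subseteq\Delta$ that have maximum cardinality among all nonempty founded sub-multisets of $\Delta$.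 Set $E'(\Delta)=\bigcup_{S\in MFS(\Delta)}E(S)$. This union is empty if $MFS(\Delta)=\emptyset$. Cardinalities $|\cdot|$ count indices. *)

(* Defs.v *)
From HB Require Import structures.
From mathcomp Require Import all_boot all_order all_algebra.
From mathcomp Require Import all_classical all_reals all_analysis.
Set Implicit Arguments. Unset Strict Implicit. Unset Printing Implicit Defensive.
Import Order.TTheory GRing.Theory Num.Theory.
Local Open Scope ring_scope.

Inductive form (A : Type) : Type :=
  | FTop : form A
  | FBot : form A
  | FAtom : A -> form A
  | FNeg : form A -> form A
  | FAnd : form A -> form A -> form A
  | FOr : form A -> form A -> form A
  | FImp : form A -> form A -> form A.

Fixpoint eval (A : Type) (v : A -> bool) (f : form A) : bool :=
  match f with
  | FTop => true
  | FBot => false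
  | FAtom a => v a
  | FNeg g => ~~ eval v g
  | FAnd g h => eval v g && eval v h
  | FOr g h => eval v g || eval v h
  | FImp g h => eval v g ==> eval v h
  end.

(* Time-indexed formula alpha^t; times 1..T are represented by 'I_T (0-based). *)
Definition tform (A : Type) (T : nat) : Type := (form A * 'I_T)%type.

(* Data d_1..d_K are indices 'I_K; m k t is the model m(d_k)^t.
   [[alpha^t]]_k : *)
Definition sem (A : Type) (K T : nat) (m : 'I_K -> 'I_T -> A -> bool)
  (k : 'I_K) (x : tform A T) : bool := eval (m k x.2) x.1.

(* Finite multisets of time-indexed formulas are sequences (order irrelevant). *)

Definition pX (R : realType) (A : Type) (K T : nat) (m : 'I_K -> 'I_T -> A -> bool)
  (X : seq (tform A T)) (k : 'I_K) (mu : R) : R :=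
  \prod_(x <- X) (if sem m k x then mu else 1 - mu).

(* The ratio whose limit as mu -> 1 defines p(Omega | Delta); prior p(d_k) = 1/K. *)
Definition pcond_ratio (R : realType) (A : Type) (K T : nat)
  (m : 'I_K -> 'I_T -> A -> bool) (Om De : seq (tform A T)) (mu : R) : R :=
  (\sum_(k < K) pX m Om k mu * pX m De k mu * K%:R^-1) /
  (\sum_(k < K) pX m De k mu * K%:R^-1).

Definition Ev (A : Type) (K T : nat) (m : 'I_K -> 'I_T -> A -> bool)
  (X : seq (tform A T)) : {set 'I_K} :=
  [set k | all (sem m k) X].

Definition founded (A : Type) (K T : nat) (m : 'I_K -> 'I_T -> A -> bool)
  (X : seq (tform A T)) : bool := Ev m X != finset.set0.

(* Sub-multisets of De are exactly (up to order) the masks of De. *)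
Definition is_MFS (A : Type) (K T : nat) (m : 'I_K -> 'I_T -> A -> bool)
  (De : seq (tform A T)) (b : (size De).-tuple bool) : bool :=
  [&& (0 < size (mask b De))%N, founded m (mask b De) &
      [forall b' : (size De).-tuple bool,
         (0 < size (mask b' De))%N && founded m (mask b' De) ==>
         (size (mask b' De) <= size (mask b De))%N]].

Definition Ev' (A : Type) (K T : nat) (m : 'I_K -> 'I_T -> A -> bool)
  (De : seq (tform A T)) : {set 'I_K} :=
  \bigcup_(b : (size De).-tuple bool | @is_MFS A K T m De b) Ev m (mask b De).

(* Main.v *)
Require Import Defs.
From HB Require Import structures.
From mathcomp Require Import all_boot all_order all_algebra.
From mathcomp Require Import all_classical all_reals all_analysis.
From mathcomp Require Import ring zify.
Set Implicit Arguments. Unset Strict Implicit.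
Import Order.TTheory GRing.Theory Num.Theory numFieldNormedType.Exports.
Local Open Scope ring_scope.

Section Comb.
Variables (A : Type) (K T : nat) (m : 'I_K -> 'I_T -> A -> bool) (De : seq (tform A T)).

Definition cnt (k : 'I_K) := count (sem m k) De.

Definition tk (k : 'I_K) : (size De).-tuple bool :=
  @Tuple _ _ (map (sem m k) De) (introT eqP (size_map _ _)).

Lemma mask_tk k : mask (tk k) De = seq.filter (sem m k) De.
Proof. by rewrite filter_mask. Qed.

Lemma size_tk k : size (mask (tk k) De) = cnt k.
Proof. by rewrite mask_tk size_filter. Qed.

Lemma in_Ev_tk k : k \in Ev m (mask (tk k) De).
Proof. by rewrite inE mask_tk filter_all. Qed.

Lemma founded_tk k : founded m (mask (tk k) De).
Proof. by apply/set0Pn; exists k; apply: in_Ev_tk. Qed.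

Lemma size_le_cnt (b : (size De).-tuple bool) k :
  k \in Ev m (mask b De) -> (size (mask b De) <= cnt k)%N.
Proof.
rewrite inE all_count => /eqP <-; exact: leq_count_mask.
Qed.

Lemma Ev'_max k : k \in Ev' m De -> forall j, (cnt j <= cnt k)%N.
Proof.
case/bigcupP=> b /and3P[Hpos Hf /forallP Hmax] Hk j.
have Hs := size_le_cnt Hk.
case: (posnP (cnt j)) => [->//|Hj].
have := Hmax (tk j); rewrite size_tk Hj founded_tk /= => H.
exact: leq_trans H Hs.
Qed.

Lemma Ev'_pos k : k \in Ev' m De -> (0 < cnt k)%N.
Proof.
case/bigcupP=> b /and3P[Hpos _ _] Hk.
exact: leq_trans Hpos (size_le_cnt Hk).
Qed.

Lemma Ev'E k0 : k0 \in Ev' m De -> Ev' m De = [set k | cnt k == cnt k0].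
Proof.
move=> H0; apply/setP=> k; rewrite inE; apply/idP/idP.
  move=> Hk; rewrite eqn_leq (Ev'_max Hk) (Ev'_max H0) //.
move=> /eqP Hc; apply/bigcupP; exists (tk k); last exact: in_Ev_tk.
apply/and3P; split; first by rewrite size_tk Hc (Ev'_pos H0).
  exact: founded_tk.
apply/forallP=> b'; apply/implyP=> /andP[_ /set0Pn[j Hj]].
rewrite size_tk Hc; exact: leq_trans (size_le_cnt Hj) (Ev'_max H0 j).
Qed.
End Comb.

Lemma prod_if (R : comRingType) (X : Type) (s : seq X) (P : pred X) (a b : R) :
  \prod_(x <- s) (if P x then a else b) = a ^+ count P s * b ^+ count (predC P) s.
Proof.
elim: s => [|x s IH]; first by rewrite big_nil !expr0 mulr1.
rewrite big_cons IH /=; case: (P x) => /=; rewrite ?add0n ?add1n !exprS; ring.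
Qed.

Lemma prod01 (R : comRingType) (X : Type) (s : seq X) (P : pred X) :
  \prod_(x <- s) (if P x then 1 else 0 : R) = (all P s)%:R.
Proof.
elim: s => [|x s IH]; first by rewrite big_nil.
by rewrite big_cons IH /=; case: (P x); rewrite ?mul1r ?mul0r.
Qed.

Lemma sum_ind (R : comRingType) (K : nat) (S : {set 'I_K}) :
  \sum_(k < K) ((k \in S)%:R : R) = #|S|%:R.
Proof.
rewrite -sumr_const [RHS]big_mkcond; apply: eq_bigr => k _; by case: (k \in S).
Qed.

Local Open Scope classical_set_scope.

Theorem theorem1 (R : realType) (A : Type) (K T : nat)
  (hK : (1 <= K)%N) (hT : (1 <= T)%N)
  (m : 'I_K -> 'I_T -> A -> bool) (Om De : seq (tform A T)) :
  Ev' m De != finset.set0 ->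
  pcond_ratio m Om De mu @[mu --> (1 : R)^'-] -->
    ((#|Ev m Om :&: Ev' m De|%:R : R) / #|Ev' m De|%:R).
Proof.
case/set0Pn => k0 H0.
set c0 := cnt m De k0.
set bb := (size De - c0)%N.
have cle : forall k, (cnt m De k <= c0)%N by move=> k; exact: Ev'_max H0 k.
have c0le : (c0 <= size De)%N by exact: count_size.
pose pP (X : seq (tform A T)) k : {poly R} :=
  \prod_(x <- X) (if sem m k x then 'X else 1 - 'X).
have pXh : forall X k mu, pX m X k mu = (pP X k).[mu].
  move=> X k mu; rewrite /pX horner_prod; apply: eq_bigr => x _.
  by case: ifP; rewrite !hornerE.
pose G : {poly R} := \sum_(k < K) pP Om k * 'X^(cnt m De k) *
   (1 - 'X) ^+ (c0 - cnt m De k) * (K%:R^-1)%:P.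
pose H : {poly R} := \sum_(k < K) 'X^(cnt m De k) *
   (1 - 'X) ^+ (c0 - cnt m De k) * (K%:R^-1)%:P.
have hk : forall k (mu : R), pX m De k mu =
    (1 - mu) ^+ bb * (mu ^+ cnt m De k * (1 - mu) ^+ (c0 - cnt m De k)).
  move=> k mu; rewrite /pX prod_if.
  have -> : count (predC (sem m k)) De = (bb + (c0 - cnt m De k))%N.
    have := count_predC (sem m k) De; rewrite /bb -/(cnt m De k).
    have := cle k; lia.
  rewrite exprD; ring.
have Cl1 : forall mu : R, mu != 1 -> pcond_ratio m Om De mu = G.[mu] / H.[mu].
  move=> mu hmu; rewrite /pcond_ratio.
  have -> : \sum_(k < K) pX m Om k mu * pX m De k mu * K%:R^-1 =
      (1 - mu) ^+ bb * G.[mu].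
    rewrite horner_sum mulr_sumr; apply: eq_bigr => k _.
    by rewrite hk pXh !hornerE /= [_ * (1 - mu) ^+ bb]mulrC.
  rewrite [X in _ / X](_ : _ = (1 - mu) ^+ bb * H.[mu]); last first.
    rewrite horner_sum mulr_sumr; apply: eq_bigr => k _.
    by rewrite hk !hornerE /=.
  rewrite -mulf_div divff ?mul1r //.
  by rewrite expf_neq0 // subr_eq0 eq_sym.
have E'E := Ev'E H0.
have Kn0 : (K%:R^-1 : R) != 0 by rewrite invr_eq0 pnatr_eq0 -lt0n.
have G1 : G.[1] = #|Ev m Om :&: Ev' m De|%:R * K%:R^-1.
  rewrite -sum_ind mulr_suml horner_sum; apply: eq_bigr => k _.
  rewrite !hornerE /pP horner_prod.
  under eq_bigr do rewrite (fun_if (fun p => p.[1])) !hornerE subrr.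
  rewrite prod01 expr1n mulr1 subrr expr0n E'E !inE -/c0 subn_eq0 eqn_leq cle /=.
  by case: (all _ _); case: (c0 <= _)%N; rewrite /= ?mul1r ?mul0r ?mulr0 ?mulr1.
have H1 : H.[1] = #|Ev' m De|%:R * K%:R^-1.
  rewrite -sum_ind mulr_suml horner_sum; apply: eq_bigr => k _.
  rewrite !hornerE subrr expr1n mul1r expr0n E'E !inE -/c0 subn_eq0 eqn_leq cle /=.
  by case: (c0 <= _)%N; rewrite /= ?mul1r ?mul0r.
have H1n0 : H.[1] != 0.
  by rewrite H1 mulf_neq0 // pnatr_eq0 -lt0n; apply/card_gt0P; exists k0.
have -> : (#|Ev m Om :&: Ev' m De|%:R : R) / #|Ev' m De|%:R = G.[1] / H.[1].
  by rewrite G1 H1 -mulf_div divff ?mulr1.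
apply: (@cvg_trans _ ((fun mu => G.[mu] / H.[mu]) @ (1 : R)^'-)).
  apply: near_eq_cvg.
  near=> mu; rewrite Cl1 //.
apply: cvg_at_left_filter.
apply: cvgM; first exact: continuous_horner.
apply: cvgV => //; exact: continuous_horner.
Unshelve. all: by end_near.
Qed.
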